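(* Let $G$ be a graph and let $H = K_1 + G$ be the join of a single new node with $G$. If $H$ is an eulerian graph whose number of edges $q$ satisfies $q \equiv 1$ or $2 \pmod 4$, then $G$ is non-supergraceful.
   Context: Graphs are finite, simple. An eulerian graph is a connected graph all of whose nodes have even degree. For a graph $G$ with $p$ nodes and $q$ edges, a total labeling is a map $\varphi: V(G) \to \{1,\dots,p+q\}$ such that the $p$ node labels and the $q$ edge labels $|\varphi(u)-\varphi(v)|$, $uv \in E(G)$, are all pairwise distinct, so that together they form exactly $\{1,\dots,p+q\}$. $G$ is supergraceful if it admits a total labeling, and non-supergraceful otherwise. *)

(* Defs.v *)
From mathcomp Require Import all_boot.
Set Implicit Arguments. Unset Strict Implicit. Unset Printing Implicit Defensive.

(* A finite simple graph: vertex type V : finType with an adjacency relation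
   e : rel V that is symmetric and irreflexive (assumed as hypotheses). *)

Definition edges (V : finType) (e : rel V) : {set {set V}} :=
  [set E : {set V} | [exists x, exists y, e x y && (E == [set x; y])]].

Definition nverts (V : finType) : nat := #|V|.
Definition nedges (V : finType) (e : rel V) : nat := #|edges e|.

Definition deg (V : finType) (e : rel V) (x : V) : nat := #|[set y | e x y]|.

Definition connected_graph (V : finType) (e : rel V) : Prop :=
  forall x y : V, connect e x y.

Definition eulerian (V : finType) (e : rel V) : Prop :=
  connected_graph e /\ forall x : V, ~~ odd (deg e x).

Definition natdist (m n : nat) : nat := (m - n) + (n - m).

Definition joinK1 (V : finType) (e : rel V) : rel (option V) :=
  fun a b => match a, b with
             | Some x, Some y => e x y
             | None, Some _ | Some _, None => true
             | None, None => false
             end.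

(* total labeling: node labels in {1..p+q}; node labels and edge labels
   |phi u - phi v| all pairwise distinct and in {1..p+q} (hence, since there
   are p+q of them, they form exactly {1..p+q}). *)
Definition total_labeling (V : finType) (e : rel V) (phi : V -> nat) : Prop :=
  let N := nverts V + nedges e in
  [/\ forall x, 1 <= phi x <= N,
      forall x y, e x y -> 1 <= natdist (phi x) (phi y) <= N,
      injective phi,
      forall x y x' y', e x y -> e x' y' -> [set x; y] != [set x'; y'] ->
        natdist (phi x) (phi y) != natdist (phi x') (phi y')
    & forall x y z, e x y -> natdist (phi x) (phi y) != phi z].

Definition supergraceful (V : finType) (e : rel V) : Prop :=
  exists phi : V -> nat, total_labeling e phi.

(* Main.v *)
Require Import Defs.
From mathcomp Require Import all_boot zify.

Lemma sum_option (V : finType) (f : option V -> nat) :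
  \sum_(a : option V) f a = f None + \sum_(x : V) f (Some x).
Proof.
rewrite -big_enum (perm_big (None :: map Some (enum V))).
  by rewrite big_cons big_map big_enum.
apply: uniq_perm; first exact: enum_uniq.
  rewrite /= map_inj_uniq ?enum_uniq ?andbT; last by move=> ? ? [].
  by apply/mapP => -[].
case=> [x|]; rewrite mem_enum inE //= (mem_map (@Some_inj _)) mem_enum.
by apply/idP/idP.
Qed.


Section Hand.
Variables (T : finType) (r : rel T).
Hypotheses (rs : symmetric r) (ri : irreflexive r).

Definition Dp := [set u : T * T | r u.1 u.2 && (enum_rank u.1 < enum_rank u.2)].

Lemma rank_neq x y : r x y -> (enum_rank x < enum_rank y) || (enum_rank y < enum_rank x).
Proof.
move=> rxy; rewrite -neq_ltn; apply/negP => /eqP /val_inj /enum_rank_inj exy.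
by move: rxy; rewrite exy ri.
Qed.

Lemma Dp_inj : {in Dp &, injective (fun u : T * T => [set u.1; u.2])}.
Proof.
move=> [a b] [c d]; rewrite !inE /= => /andP[rab hab] /andP[rcd hcd] E.
have : a \in [set c; d] by rewrite -E !inE eqxx.
have : b \in [set c; d] by rewrite -E !inE eqxx orbT.
rewrite !inE => /orP[/eqP eb|/eqP eb] /orP[/eqP ea|/eqP ea]; subst.
all: first [ by move: rab; rewrite ri | by move: rcd; rewrite ri | by [] | by move: hab hcd; lia ].
Qed.

Lemma card_Dp : #|Dp| = nedges r.
Proof.
rewrite /nedges -(@card_in_imset _ _ (fun u => [set u.1; u.2]) Dp).
  apply: eq_card => E; rewrite [in RHS]inE; apply/imsetP/existsP.
    case=> [[x y]]; rewrite inE /= => /andP[rxy _] ->.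
    by exists x; apply/existsP; exists y; rewrite rxy eqxx.
  case=> x /existsP [y /andP [rxy /eqP ->]].
  case/orP: (@rank_neq x y rxy) => h.
    by exists (x, y) => //; rewrite inE /= rxy h.
  by exists (y, x); [rewrite inE /= rs rxy h | rewrite /= setUC].
exact: Dp_inj.
Qed.

Lemma sum_D2 (F : T -> nat) :
  \sum_(u | r u.1 u.2) F u.1 = \sum_(u in Dp) (F u.1 + F u.2).
Proof.
rewrite (bigID (fun u : T * T => enum_rank u.1 < enum_rank u.2)) /= big_split /=.
congr (_ + _).
  by apply: eq_bigl => u; rewrite inE.
rewrite (reindex_inj (h := fun u : T * T => (u.2, u.1))); last first.
  by move=> [a b] [c d] [-> ->].
apply: eq_bigl => [[a b]] /=; rewrite inE /= rs.
case rab: (r a b) => //=.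
case/orP: (@rank_neq a b rab) => h; first by rewrite -leqNgt ltnW.
by rewrite h ltnNge ltnW.
Qed.

Lemma sum_deg (F : T -> nat) :
  \sum_(u | r u.1 u.2) F u.1 = \sum_x deg r x * F x.
Proof.
rewrite -(pair_big_dep xpredT (fun x y => r x y) (fun x _ => F x)) /=.
apply: eq_bigr => x _; rewrite sum_nat_const /deg.
by congr (_ * _); apply: eq_card => y; rewrite inE.
Qed.

Lemma handshake : 2 * nedges r = \sum_x deg r x.
Proof.
rewrite -card_Dp.
have h1 := sum_D2 (fun _ => 1); have h2 := sum_deg (fun _ => 1).
rewrite /= in h1 h2; rewrite h2 in h1.
under eq_bigr do rewrite -[deg r _]muln1.
rewrite h1 sum_nat_const; lia.
Qed.
End Hand.

Lemma gauss N : 2 * \sum_(i <- iota 1 N) i = N * N.+1.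
Proof.
elim: N => [|N IH]; first by rewrite big_nil.
rewrite (_ : iota 1 N.+1 = iota 1 N ++ [:: N.+1]); last by rewrite -(iotaD 1 N 1) addn1.
rewrite big_cat big_seq1 mulnDr IH; lia.
Qed.

Section Main.
Variables (V : finType) (e : rel V).
Hypotheses (e_sym : symmetric e) (e_irr : irreflexive e).

Lemma joinK1_sym : symmetric (joinK1 e).
Proof. by case=> [x|] [y|] //=; rewrite e_sym. Qed.

Lemma joinK1_irr : irreflexive (joinK1 e).
Proof. by case=> [x|] //=; rewrite e_irr. Qed.

Lemma deg_None : deg (joinK1 e) None = #|V|.
Proof.
rewrite /deg -[#|V|]/(#|V|.+1.-1) -card_option -(cardsC1 (None : option V)).
by apply: eq_card => -[x|]; rewrite !inE.
Qed.

Lemma deg_Some x : deg (joinK1 e) (Some x) = (deg e x).+1.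
Proof.
rewrite /deg.
have -> : [set b | joinK1 e (Some x) b] = None |: (Some @: [set y | e x y]).
  apply/setP => -[y|]; rewrite !inE //=.
  by rewrite mem_imset ?inE //; exact: Some_inj.
rewrite cardsU1 card_imset; last exact: Some_inj.
by rewrite (_ : None \notin _) //; apply/imsetP => -[].
Qed.

Lemma nedges_join : nedges (joinK1 e) = #|V| + nedges e.
Proof.
have h1 := @handshake _ _ joinK1_sym joinK1_irr.
have h2 := @handshake _ _ e_sym e_irr.
rewrite sum_option deg_None in h1.
rewrite (eq_bigr (fun x => (deg e x).+1)) in h1; last by move=> x _; rewrite deg_Some.
rewrite (eq_bigr (fun x => deg e x + 1)) in h1; last by move=> x _; rewrite addn1.
have hs : \sum_x (deg e x + 1) = \sum_x deg e x + #|V|.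
  by rewrite big_split /= sum1_card.
rewrite hs -h2 in h1; lia.
Qed.
End Main.

Theorem corollary7p4 (V : finType) (e : rel V)
  (e_sym : symmetric e) (e_irr : irreflexive e) :
  eulerian (joinK1 e) ->
  (nedges (joinK1 e) %% 4 = 1 \/ nedges (joinK1 e) %% 4 = 2) ->
  ~ supergraceful e.
Proof.
move=> [_ hdeg] hq [phi [h1 h2 h3 h4 h5]].
rewrite (@nedges_join V e e_sym e_irr) in hq.
have odddeg x : odd (deg e x).
  by have := hdeg (Some x); rewrite (@deg_Some V e) /=; case: odd.
set N := nverts V + nedges e in h1 h2.
pose lab (u : V * V) := natdist (phi u.1) (phi u.2).
pose S := map phi (enum V) ++ map lab (enum (@Dp V e)).
have uS : uniq S.
  rewrite cat_uniq map_inj_uniq ?enum_uniq //=; apply/andP; split.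
    apply/hasPn => _ /mapP [u hu ->]; apply/mapP => -[z _ hz].
    move: hu; rewrite mem_enum inE => /andP[hu _].
    by move: (h5 _ _ z hu); rewrite /lab in hz; rewrite hz eqxx.
  rewrite map_inj_in_uniq ?enum_uniq // => u v; rewrite !mem_enum => hu hv hl.
  case: (eqVneq u v) => // huv; exfalso.
  have hne : [set u.1; u.2] != [set v.1; v.2].
    by apply: contra huv => /eqP h; have := @Dp_inj V e e_irr u v hu hv h => ->.
  move: hu hv; rewrite !inE => /andP[hu _] /andP[hv _].
  by have := h4 _ _ _ _ hu hv hne; rewrite /lab in hl; rewrite hl eqxx.
have sS : {subset S <= iota 1 N}.
  move=> x; rewrite mem_cat mem_iota => /orP[] /mapP [u hu ->].
    by have := h1 u; lia.
  move: hu; rewrite mem_enum inE => /andP[hu _].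
  by have := h2 _ _ hu; rewrite /lab; lia.
have sz : size (iota 1 N) <= size S.
  rewrite size_iota size_cat !size_map -!cardE /N /nverts (@card_Dp V e e_sym e_irr).
  by rewrite cardT enumT.
have [_ eqS] := uniq_min_size uS sS sz.
have pS : perm_eq S (iota 1 N) by apply: uniq_perm => //; apply: iota_uniq.
have hsum := perm_big _ pS (P := xpredT) (F := id) (op := addn) (x := 0).
rewrite big_cat /= !big_map !big_enum /= in hsum.
have hg := gauss N.
rewrite -hsum in hg.
have hlab : \sum_(u in @Dp V e) lab u + 2 * \sum_(u in @Dp V e) minn (phi u.1) (phi u.2)
   = \sum_x deg e x * phi x.
  rewrite -(@sum_deg V e phi) (@sum_D2 V e e_sym e_irr phi) big_distrr -big_split /=.
  by apply: eq_bigr => u _; rewrite /lab /natdist; lia.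
have hev : \sum_x phi x + \sum_x deg e x * phi x = 2 * \sum_x ((deg e x).+1./2 * phi x).
  rewrite big_distrr -big_split /=; apply: eq_bigr => x _.
  have hd := odd_double_half (deg e x); rewrite (odddeg x) in hd.
  rewrite -hd; move: ((deg e x)./2) => k.
  have -> : uphalf (true + k.*2) = k.+1 by rewrite add1n uphalfE -doubleS doubleK.
  rewrite -mul2n; lia.
have : N = #|V| + nedges e by [].
move: hq hg hlab hev.
set A := \sum_x phi x; set B := \sum_(u in @Dp V e) lab u.
set C := \sum_(u in @Dp V e) _; set D := \sum_x _ ; set E := \sum_x _.
move=> hq hg hlab hev hN.
have hAB : A + B = 2 * (E - C) by lia.
rewrite hAB in hg; move: hq; rewrite -hN.
move: hg; set t := E - C.
move=> hg hq.
have g4 : 4 * t = N * N.+1 by lia.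
case: hq => hq.
  have [k hk] : exists k, N = 4 * k + 1 by exists (N %/ 4); rewrite {1}(divn_eq N 4) hq; lia.
  rewrite hk in g4; nia.
have [k hk] : exists k, N = 4 * k + 2 by exists (N %/ 4); rewrite {1}(divn_eq N 4) hq; lia.
rewrite hk in g4; nia.
Qed.
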